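(* Let $X$ be a Type I space, written as $X=\bigcup_{\alpha<\omega_1}U_\alpha$ as in the definition of Type I, and let $h_t:X\to X$, $t\in[0,1]$, be an isotopy of homeomorphisms. Then $$\Big\{\alpha<\omega_1 \;:\; h_t\Big(\bigcup_{\beta<\alpha}U_\beta\Big)=\bigcup_{\beta<\alpha}U_\beta \text{ for all } t\in[0,1]\Big\}$$ is a closed unbounded subset of $\omega_1$.
   Context: A topological space $X$ is of Type I if it is the union of an $\omega_1$-sequence $\langle U_\alpha:\alpha<\omega_1\rangle$ of open subsets such that whenever $\alpha<\beta<\omega_1$ we have $\overline{U_\alpha}\subset U_\beta$ and $U_\alpha$ is Lindelöf. An isotopy of homeomorphisms of $X$ is a continuous map $H:X\times[0,1]\to X$ such that each $h_t=H(\cdot,t)$ is a homeomorphism of $X$. *)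

(* Defs.v *)
From Stdlib Require Import Reals.
Open Scope R_scope.

Record topology (X : Type) := Topology {
  is_open : (X -> Prop) -> Prop;
  open_full : is_open (fun _ => True);
  open_inter : forall U V, is_open U -> is_open V -> is_open (fun x => U x /\ V x);
  open_union : forall F : (X -> Prop) -> Prop,
      (forall V, F V -> is_open V) -> is_open (fun x => exists V, F V /\ V x)
}.
Arguments is_open {X} _ _.

Definition closure {X} (T : topology X) (A : X -> Prop) (x : X) : Prop :=
  forall V, is_open T V -> V x -> exists y, V y /\ A y.

(* A subset A is Lindelof (as a subspace): every cover of A by open sets of X
   has a countable subcover (empty sets allowed as padding). *)
Definition lindelof {X} (T : topology X) (A : X -> Prop) : Prop :=
  forall F : (X -> Prop) -> Prop,
    (forall V, F V -> is_open T V) ->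
    (forall x, A x -> exists V, F V /\ V x) ->
    exists g : nat -> (X -> Prop),
      (forall n, F (g n) \/ (forall x, ~ g n x)) /\
      (forall x, A x -> exists n, g n x).

Definition continuous {X Y} (TX : topology X) (TY : topology Y) (f : X -> Y) : Prop :=
  forall V, is_open TY V -> is_open TX (fun x => V (f x)).

Definition homeomorphism {X} (T : topology X) (h : X -> X) : Prop :=
  exists g : X -> X,
    (forall x, g (h x) = x) /\ (forall y, h (g y) = y) /\
    continuous T T h /\ continuous T T g.

(* Continuity of H : X x [0,1] -> X for the product topology
   (Euclidean topology on [0,1]), written out pointwise. *)
Definition continuous_on_XI {X} (T : topology X) (H : X -> R -> X) : Prop :=
  forall (V : X -> Prop) (x : X) (t : R),
    is_open T V -> 0 <= t <= 1 -> V (H x t) ->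
    exists U delta, is_open T U /\ U x /\ 0 < delta /\
      forall y s, U y -> 0 <= s <= 1 -> Rabs (s - t) < delta -> V (H y s).

Definition isotopy {X} (T : topology X) (H : X -> R -> X) : Prop :=
  continuous_on_XI T H /\
  forall t, 0 <= t <= 1 -> homeomorphism T (fun x => H x t).

Definition is_omega1 (W : Type) (lt : W -> W -> Prop) : Prop :=
  (forall a b c, lt a b -> lt b c -> lt a c) /\
  (forall a b, lt a b \/ a = b \/ lt b a) /\
  well_founded lt /\
  (forall a, exists f : nat -> W, forall b, lt b a -> exists n, f n = b) /\
  (forall f : nat -> W, exists a, forall n, f n <> a).

Definition type_I {X} (T : topology X) (W : Type) (lt : W -> W -> Prop)
    (U : W -> X -> Prop) : Prop :=
  (forall a, is_open T (U a)) /\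
  (forall x, exists a, U a x) /\
  (forall a b, lt a b -> forall x, closure T (U a) x -> U b x) /\
  (forall a, lindelof T (U a)).

Definition unbounded {W} (lt : W -> W -> Prop) (C : W -> Prop) : Prop :=
  forall a, exists b, C b /\ (a = b \/ lt a b).

Definition limit_point_of {W} (lt : W -> W -> Prop) (C : W -> Prop) (a : W) : Prop :=
  (exists b, C b /\ lt b a) /\
  (forall c, lt c a -> exists b, C b /\ lt c b /\ lt b a).

Definition club {W} (lt : W -> W -> Prop) (C : W -> Prop) : Prop :=
  (forall a, limit_point_of lt C a -> C a) /\ unbounded lt C.

Definition image_eq {X} (h : X -> X) (A : X -> Prop) : Prop :=
  (forall x, A x -> A (h x)) /\ (forall y, A y -> exists x, A x /\ h x = y).

(* Main.v *)
Require Import Defs.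
From Stdlib Require Import Reals Lra Lia Classical ClassicalEpsilon FunctionalExtensionality PropExtensionality Cantor.
Open Scope R_scope.

Lemma choice_nat {A : Type} (P : nat -> A -> Prop) :
  (forall n, exists a, P n a) -> exists f : nat -> A, forall n, P n (f n).
Proof.
  intros Hp. exists (fun n => proj1_sig (constructive_indefinite_description _ (Hp n))).
  intros n. exact (proj2_sig (constructive_indefinite_description _ (Hp n))).
Qed.

Lemma choice_gen {A B : Type} (P : A -> B -> Prop) :
  (forall n, exists a, P n a) -> exists f : A -> B, forall n, P n (f n).
Proof.
  intros Hp. exists (fun n => proj1_sig (constructive_indefinite_description _ (Hp n))).
  intros n. exact (proj2_sig (constructive_indefinite_description _ (Hp n))).
Qed.

Lemma bound (W : Type) (lt : W -> W -> Prop) : is_omega1 W lt ->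
  forall f : nat -> W, exists b, forall n, lt (f n) b.
Proof.
  intros [Htr [Htot [Hwf [Hcnt Hunc]]]] f.
  destruct (choice_nat (fun n e => forall b, lt b (f n) -> exists k, e k = b)
     (fun n => Hcnt (f n))) as [e He].
  set (g := fun k => let '(n, m) := Cantor.of_nat k in
                     match m with O => f n | S m' => e n m' end).
  destruct (Hunc g) as [a Ha]. exists a. intros n.
  destruct (Htot (f n) a) as [H|[H|H]]; auto.
  - exfalso. apply (Ha (Cantor.to_nat (n, O))). unfold g.
    rewrite Cantor.cancel_of_to. auto.
  - exfalso. destruct (He n a H) as [k Hk].
    apply (Ha (Cantor.to_nat (n, S k))). unfold g.
    rewrite Cantor.cancel_of_to. auto.
Qed.

Lemma bound_family (W : Type) (lt : W -> W -> Prop) : is_omega1 W lt ->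
  forall P : nat -> W -> Prop,
  (forall n b b', P n b -> lt b b' -> P n b') ->
  (forall n, exists b, P n b) -> exists b, forall n, P n b.
Proof.
  intros om P Hup Hex.
  destruct (choice_nat P Hex) as [c Hc].
  destruct (bound W lt om c) as [b Hb]. exists b. intros n. eauto.
Qed.

Lemma above2 (W : Type) (lt : W -> W -> Prop) : is_omega1 W lt ->
  forall x y, exists b, lt x b /\ lt y b.
Proof.
  intros om x y. destruct (bound W lt om (fun n => match n with O => x | _ => y end)) as [b Hb].
  exists b. split; [apply (Hb O) | apply (Hb 1%nat)].
Qed.

Lemma minimal (W : Type) (lt : W -> W -> Prop) : well_founded lt ->
  forall Q : W -> Prop, forall a, Q a -> exists m, Q m /\ forall c, lt c m -> ~ Q c.
Proof.
  intros wf Q a. induction a as [a IH] using (well_founded_ind wf). intros Qa.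
  destruct (classic (exists c, lt c a /\ Q c)) as [[c [Hc Qc]]|Hn].
  - exact (IH c Hc Qc).
  - exists a. split; auto. intros c Hc Qc. apply Hn. eauto.
Qed.
Definition tau (p m : nat) : R := Rmin 1 (INR p / INR (S m)).

Lemma tau_range p m : 0 <= tau p m <= 1.
Proof.
  unfold tau. split.
  - apply Rmin_glb; [lra|]. unfold Rdiv; apply Rmult_le_pos; [apply pos_INR| left; apply Rinv_0_lt_compat, lt_0_INR; lia].
  - apply Rmin_l.
Qed.

Lemma floor_nat (x : R) : 0 <= x -> exists p : nat, INR p <= x < INR p + 1.
Proof.
  intros Hx. destruct (INR_unbounded x) as [N HN].
  revert HN. induction N as [|N IH]; intros HN.
  - simpl in HN. lra.
  - destruct (Rlt_le_dec x (INR N)) as [H|H]; auto.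
    exists N. rewrite S_INR in HN. lra.
Qed.

Lemma tau_dense t d : 0 <= t <= 1 -> 0 < d -> exists p m, Rabs (tau p m - t) < d.
Proof.
  intros Ht Hd.
  destruct (INR_unbounded (/ d)) as [m Hm].
  assert (Hm0 : 0 < INR (S m)) by (apply lt_0_INR; lia).
  assert (Hmm : INR m < INR (S m)) by (apply lt_INR; lia).
  destruct (floor_nat (t * INR (S m))) as [p Hp]. { apply Rmult_le_pos; lra. }
  exists p, m.
  assert (E : INR p / INR (S m) <= t).
  { apply (Rmult_le_reg_r (INR (S m))); auto. unfold Rdiv. rewrite Rmult_assoc, Rinv_l; lra. }
  unfold tau. rewrite Rmin_right by lra.
  assert (E2 : t - INR p / INR (S m) < / INR (S m)).
  { apply (Rmult_lt_reg_r (INR (S m))); auto. unfold Rdiv.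
    rewrite Rmult_minus_distr_r, Rmult_assoc, !Rinv_l by lra. lra. }
  assert (E3 : / INR (S m) < d).
  { assert (0 < / d) by (apply Rinv_0_lt_compat; lra).
    rewrite <- (Rinv_inv d). apply Rinv_lt_contravar; [apply Rmult_lt_0_compat|]; lra. }
  rewrite Rabs_left1 by lra. lra.
Qed.

Definition Vs {X W} (lt : W -> W -> Prop) (U : W -> X -> Prop) (a : W) (x : X) :=
  exists b, lt b a /\ U b x.

Lemma U_mono {X} (T : topology X) W lt U : type_I T W lt U ->
  forall a b x, lt a b -> U a x -> U b x.
Proof.
  intros [_ [_ [Hc _]]] a b x Hab Hx. apply (Hc a b Hab). intros V _ HV. eauto.
Qed.

Lemma Vs_sub_U {X} (T : topology X) W lt U : type_I T W lt U ->
  forall a x, Vs lt U a x -> U a x.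
Proof. intros ty a x [b [Hb Hx]]. eapply U_mono; eauto. Qed.

Lemma Vs_mono {X} W (lt : W -> W -> Prop) (U : W -> X -> Prop) : is_omega1 W lt ->
  forall a b x, lt a b -> Vs lt U a x -> Vs lt U b x.
Proof. intros [Htr _] a b x Hab [c [Hc Hx]]. exists c. split; eauto. Qed.

Lemma Vs_open {X} (T : topology X) W lt U : type_I T W lt U ->
  forall a, is_open T (Vs lt U a).
Proof.
  intros ty a.
  assert (E : Vs lt U a = fun x => exists V, (fun V => exists b, lt b a /\ V = U b) V /\ V x).
  { apply functional_extensionality. intros x. apply propositional_extensionality. split.
    - intros [b [Hb Hx]]. exists (U b). split; eauto.
    - intros [V [[b [Hb ->]] Hx]]. exists b. auto. }
  rewrite E. apply open_union. intros V [b [_ ->]]. apply ty.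
Qed.

Lemma one_map {X} (T : topology X) W lt U : is_omega1 W lt -> type_I T W lt U ->
  forall f, continuous T T f -> forall a, exists b, forall x, U a x -> Vs lt U b (f x).
Proof.
  intros om ty f Hf a.
  destruct ty as [Hop [Hcov [Hcl Hlin]]] eqn:Ety.
  destruct (Hlin a (fun V => exists c, V = fun x => U c (f x))) as [g [Hg1 Hg2]].
  - intros V [c ->]. apply Hf. apply Hop.
  - intros x _. destruct (Hcov (f x)) as [c Hc]. exists (fun x => U c (f x)). eauto.
  - destruct (bound_family W lt om (fun n b => forall x, g n x -> U b (f x))) as [b Hb].
    + intros n b b' H Hbb' x Hx. eapply U_mono; eauto.
    + intros n. destruct (Hg1 n) as [[c Hc]|He].
      * exists c. rewrite Hc. auto.
      * exists a. intros x Hx. exfalso. eapply He; eauto.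
    + destruct (above2 W lt om b b) as [b' [Hb' _]]. exists b'.
      intros x Hx. destruct (Hg2 x Hx) as [n Hn]. exists b. eauto.
Qed.

Lemma family {X} (T : topology X) W lt U : is_omega1 W lt -> type_I T W lt U ->
  forall fs : nat -> X -> X, (forall n, continuous T T (fs n)) ->
  forall a, exists b, forall n x, U a x -> Vs lt U b (fs n x).
Proof.
  intros om ty fs Hfs a.
  apply (bound_family W lt om (fun n b => forall x, U a x -> Vs lt U b (fs n x))).
  - intros n b b' H Hbb' x Hx. eapply Vs_mono; eauto.
  - intros n. eapply one_map; eauto.
Qed.

Lemma family2 {X} (T : topology X) W lt U : is_omega1 W lt -> type_I T W lt U ->
  forall fs : nat -> nat -> X -> X, (forall p m, continuous T T (fs p m)) ->
  forall a, exists b, forall p m x, U a x -> Vs lt U b (fs p m x).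
Proof.
  intros om ty fs Hfs a.
  apply (bound_family W lt om (fun p b => forall m x, U a x -> Vs lt U b (fs p m x))).
  - intros n b b' H Hbb' m x Hx. eapply Vs_mono; eauto.
  - intros p. eapply family; eauto.
Qed.

Theorem corollary2p2 (X : Type) (T : topology X) (W : Type) (lt : W -> W -> Prop)
  (U : W -> X -> Prop) (H : X -> R -> X) :
  is_omega1 W lt -> type_I T W lt U -> isotopy T H ->
  club lt (fun a => forall t, 0 <= t <= 1 ->
             image_eq (fun x => H x t) (fun x => exists b, lt b a /\ U b x)).
Proof.
  intros om ty [Hcont Hhom].
  pose proof om as [Htr [Htot [Hwf _]]].
  change (fun x => exists b, lt b ?a /\ U b x) with (Vs lt U a).
  split.
  - intros a [_ Hlim] t Ht. split.
    + intros x [b [Hb Hx]]. destruct (Hlim b Hb) as [c [Cc [Hbc Hca]]].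
      destruct (Cc t Ht) as [C1 _].
      eapply Vs_mono; eauto. apply C1. exists b; auto.
    + intros y [b [Hb Hy]]. destruct (Hlim b Hb) as [c [Cc [Hbc Hca]]].
      destruct (Cc t Ht) as [_ C2].
      destruct (C2 y) as [x [Hx Hxy]]. { exists b; auto. }
      exists x. split; auto. eapply Vs_mono; eauto.
  - destruct (choice_gen (fun s (g : X -> X) => 0 <= s <= 1 ->
        (forall x, g (H x s) = x) /\ (forall y, H (g y) s = y) /\ continuous T T g))
      as [G HG].
    { intros s. destruct (classic (0 <= s <= 1)) as [Hs|Hs].
      - destruct (Hhom s Hs) as [g [g1 [g2 [_ g4]]]]. exists g. auto.
      - exists (fun x => x). intros Hs'. contradiction. }
    assert (Hstep : forall a, exists b, lt a b /\ forall p m x, U a x ->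
               Vs lt U b (H x (tau p m)) /\ Vs lt U b (G (tau p m) x)).
    { intros a.
      destruct (family2 T W lt U om ty (fun p m x => H x (tau p m))) with (a := a) as [b1 Hb1].
      { intros p m. destruct (Hhom _ (tau_range p m)) as [g [_ [_ [Hc _]]]]. exact Hc. }
      destruct (family2 T W lt U om ty (fun p m => G (tau p m))) with (a := a) as [b2 Hb2].
      { intros p m. apply (HG _ (tau_range p m)). }
      destruct (bound W lt om (fun n => match n with O => a | 1%nat => b1 | _ => b2 end))
        as [b Hb].
      exists b. split; [apply (Hb O)|]. intros p m x Hx. split.
      - eapply Vs_mono; [exact om | apply (Hb 1%nat) | apply Hb1; auto].
      - eapply Vs_mono; [exact om | apply (Hb 2%nat) | apply Hb2; auto]. }
    destruct (choice_gen _ Hstep) as [nxt Hnxt].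
    intros a0.
    set (sq := fun n => Nat.iter n nxt a0).
    assert (Hsq : forall n, sq (S n) = nxt (sq n)) by reflexivity.
    destruct (bound W lt om sq) as [s0 Hs0].
    destruct (minimal W lt Hwf (fun c => forall n, lt (sq n) c) s0 Hs0) as [s [Hs Hsmin]].
    assert (Hchar : forall x, Vs lt U s x -> exists n, U (sq n) x).
    { intros x [b [Hb Hx]].
      destruct (not_all_ex_not _ _ (Hsmin b Hb)) as [n Hn].
      exists n. destruct (Htot (sq n) b) as [E|[E|E]].
      - contradiction.
      - rewrite E. auto.
      - eapply U_mono; eauto. }
    exists s. split; [|right; apply (Hs O)].
    intros t Ht. split.
    + intros x Hx. destruct (Hchar x Hx) as [n Hn].
      assert (Hcl : closure T (U (sq (S n))) (H x t)).
      { intros O HO HOx.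
        destruct (Hcont O x t HO Ht HOx) as [Uo [d [_ [HUo [Hd Hy]]]]].
        destruct (tau_dense t d Ht Hd) as [p [m Hpm]].
        exists (H x (tau p m)). split.
        - apply Hy; auto. apply tau_range.
        - rewrite Hsq. eapply Vs_sub_U; eauto. apply (Hnxt (sq n)). auto. }
      pose proof ty as [_ [_ [Hc _]]].
      exists (sq (S (S n))). split; auto. apply (Hc (sq (S n))); auto.
      rewrite (Hsq (S n)). apply Hnxt.
    + intros y Hy. destruct (Hhom t Ht) as [g [_ [Hg2 _]]].
      exists (g y). split; [|apply Hg2].
      assert (HV : Vs lt U s (H (g y) t)) by (rewrite Hg2; auto).
      destruct (Hcont _ (g y) t (Vs_open T W lt U ty s) Ht HV)
        as [Uo [d [_ [HUo [Hd Hyy]]]]].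
      destruct (tau_dense t d Ht Hd) as [p [m Hpm]].
      assert (H1 : Vs lt U s (H (g y) (tau p m))).
      { apply Hyy; auto. apply tau_range. }
      destruct (Hchar _ H1) as [n Hn].
      destruct (Hnxt (sq n)) as [_ Hn2].
      destruct (Hn2 p m _ Hn) as [_ Hn3].
      destruct (HG _ (tau_range p m)) as [HG1 _].
      rewrite HG1 in Hn3.
      eapply Vs_mono; [exact om | | exact Hn3]. rewrite <- Hsq. apply Hs.
Qed.
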